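(* Let $\mathbf{F}$ be a finite field with $q$ elements, $V$ a finite-dimensional $\mathbf{F}$-vector space, $W\subset V$ a subspace of codimension $1$, and $T\colon W\to V$ a linear map (a partial linear map on $V$ with domain $W$). For $j\ge0$ let $e(T,j)=\#\{S\colon V\to V\text{ semi-idempotent} : S|_W=T,\ \mathrm{srk}\,S=j\}$, and for $i,j\ge0$ let $e(T,i,j)=\#\{S\colon V\to V\text{ semi-idempotent}: S|_W=T,\ \operatorname{rank} S=i,\ \mathrm{srk}\,S=j\}$. Then (1) $e(T,\mathrm{srk}\,T)=q^{\mathrm{srk}\,T}\,e(T,\mathrm{srk}\,T+1)$; (2) if $\operatorname{im} T\not\subset W$, then $e(T,\operatorname{rank} T,\mathrm{srk}\,T)=q^{\mathrm{srk}\,T}\,e(T,\operatorname{rank} T,\mathrm{srk}\,T+1)$ and $e(T,\operatorname{rank} T+1,\mathrm{srk}\,T)=q^{\mathrm{srk}\,T}\,e(T,\operatorname{rank} T+1,\mathrm{srk}\,T+1)$.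
   Context: A partial linear map on $V$ is a linear map $T\colon W\to V$ from a subspace $W=\operatorname{dom}T$. The composite of partial linear maps $T,S$ has domain $S^{-1}(\operatorname{dom}T)$ and is $v\mapsto T(S(v))$; $T^0=\mathrm{id}_V$ and $T^j$ is the $j$-fold composite. The stable rank $\mathrm{srk}\,T$ of a partial linear map is $\dim \operatorname{im} T^j$ for $j\gg0$. A linear operator $S\colon V\to V$ is semi-idempotent if $V=X\oplus Y$ with $X,Y$ $S$-stable, $S|_X=\mathrm{id}$, $S|_Y$ nilpotent. *)

(* Defs.v *)
(* V = 'rV[F]_n (row vectors), linear operators act on the
   right: v |-> v *m S.  Subspaces are row spaces of square matrices (%MS). *)
From HB Require Import structures.
From mathcomp Require Import all_boot all_order all_algebra.
From mathcomp Require Import boolp.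
Set Implicit Arguments. Unset Strict Implicit. Unset Printing Implicit Defensive.
Import GRing.Theory.
Local Open Scope ring_scope.

Section PartialMaps.
Variables (F : fieldType) (n : nat).

Definition preimmx (M U : 'M[F]_n) : 'M[F]_n := kermx (M *m cokermx U).

(* A partial linear map on V with domain D is represented by (D, A):
   it is v |-> v *m A for v in D (only the action of A on D matters).
   pdom D A j = domain of the j-fold composite T^j (T^0 = id_V). *)
Fixpoint pdom (D A : 'M[F]_n) (j : nat) : 'M[F]_n :=
  match j with
  | 0 => 1%:M
  | j'.+1 => (pdom D A j' :&: preimmx (A ^+ j') D)%MS
  end.

Definition pimg (D A : 'M[F]_n) (j : nat) : 'M[F]_n := pdom D A j *m A ^+ j.

Definition srk_is (D A : 'M[F]_n) (r : nat) : Prop :=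
  exists N, forall j, (N <= j)%N -> \rank (pimg D A j) = r.

Definition semi_idempotent (S : 'M[F]_n) : Prop :=
  exists X Y : 'M[F]_n,
    (X :&: Y == (0 : 'M[F]_n))%MS /\ (X + Y == 1%:M)%MS /\
    stablemx X S /\ stablemx Y S /\
    (forall x : 'rV[F]_n, (x <= X)%MS -> x *m S = x) /\
    (exists k, forall y : 'rV[F]_n, (y <= Y)%MS -> y *m S ^+ k = 0).

Definition extends (W A S : 'M[F]_n) : Prop :=
  forall w : 'rV[F]_n, (w <= W)%MS -> w *m S = w *m A.

End PartialMaps.

Definition e2 (F : finFieldType) (n : nat) (W A : 'M[F]_n) (j : nat) : nat :=
  #|[set S : 'M[F]_n | `[< semi_idempotent S /\ extends W A S /\
                          srk_is 1%:M S j >]]|.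

Definition e3 (F : finFieldType) (n : nat) (W A : 'M[F]_n) (i j : nat) : nat :=
  #|[set S : 'M[F]_n | `[< semi_idempotent S /\ extends W A S /\
                          \rank S = i /\ srk_is 1%:M S j >]]|.

(* Main.v *)
Require Import Defs.
From HB Require Import structures.
From mathcomp Require Import all_boot all_order all_algebra.
From mathcomp Require Import boolp.
From mathcomp Require Import zify.
Set Implicit Arguments. Unset Strict Implicit. Unset Printing Implicit Defensive.
Import GRing.Theory.
Local Open Scope ring_scope.

Section General.
Variables (F : fieldType) (n : nat).
Implicit Types (U D A S X : 'M[F]_n) (v : 'rV[F]_n).

Lemma preimmxP M U v : (v <= preimmx M U)%MS = (v *m M <= U)%MS.
Proof. by rewrite /preimmx sub_kermx mulmxA submxE. Qed.

Lemma pdomP D A j v :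
  (v <= pdom D A j)%MS <-> (forall i, (i < j)%N -> (v *m A ^+ i <= D)%MS).
Proof.
elim: j => [|j IH] /=; first by split=> // _; exact: submx1.
rewrite sub_capmx preimmxP; split.
  case/andP=> /IH H1 H2 i; rewrite ltnS leq_eqVlt; case/orP=> [/eqP->//|].
  exact: H1.
move=> H; apply/andP; split; last exact: H.
by apply/IH => i Hi; apply: H; rewrite ltnW.
Qed.

Lemma mx_rowsP (m : nat) (B C : 'M[F]_(m, n)) :
  (forall v : 'rV[F]_m, v *m B = v *m C) -> B = C.
Proof.
move=> H; apply/row_matrixP => i.
by rewrite -[B]mul1mx -[C]mul1mx !row_mul H.
Qed.

Lemma mx0_rows (m : nat) (B : 'M[F]_(n, m)) :
  (forall v : 'rV[F]_n, v *m B = 0) -> B = 0.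
Proof.
move=> H; apply/row_matrixP => i.
by rewrite -[B]mul1mx row_mul H row0.
Qed.

Lemma mulmx_exp (B : 'M[F]_n) a b : B ^+ a *m B ^+ b = B ^+ (a + b).
Proof. by rewrite mulmxE exprD. Qed.

Lemma powS S M : S ^+ M *m S = S ^+ M -> forall t, S ^+ (M + t) = S ^+ M.
Proof.
move=> H; elim=> [|t IH]; first by rewrite addn0.
by rewrite addnS exprSr -mulmxE IH.
Qed.

Lemma semiP S : semi_idempotent S <-> exists M, S ^+ M *m S = S ^+ M.
Proof.
split.
  case=> X [Y [_ [hXY [_ [_ [hX [k hY]]]]]]]; exists k.
  apply/eqP; rewrite -subr_eq0; apply/eqP; apply: mx0_rows => v.
  have : (v <= X + Y)%MS by apply: submx_trans (submx1 v) _; case/andP: hXY.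
  case/sub_addsmxP=> [[a b]] /= ->.
  have hx : forall w : 'rV_n, (w <= X)%MS -> forall i, w *m S ^+ i = w.
    move=> w hw; elim=> [|i IH]; first by rewrite expr0 mulmx1.
    by rewrite exprSr -mulmxE mulmxA IH hX.
  rewrite mulmxBr !mulmxDl !mulmxA hx ?submxMl // hX ?submxMl //.
  by rewrite hY ?submxMl // mul0mx subrr.
case=> M hM.
have hM2 : S ^+ M *m S ^+ M = S ^+ M.
  by rewrite mulmxE -exprD powS.
exists (kermx (S - 1%:M)), (kermx (S ^+ M)).
have comm : S *m S ^+ M = S ^+ M *m S by rewrite !mulmxE -exprS exprSr.
split.
  apply/andP; split; last exact: sub0mx.
  apply/rV_subP => v.
  rewrite sub_capmx !sub_kermx mulmxBr mulmx1 subr_eq0.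
  case/andP=> /eqP h1 /eqP h2; rewrite submx0.
  have : v *m S ^+ M = v.
    elim: (M) => [|i IH]; first by rewrite expr0 mulmx1.
    by rewrite exprSr -mulmxE mulmxA IH h1.
  by rewrite h2 => <-.
split.
  apply/andP; split; first exact: submx1.
  apply/rV_subP => v _.
  rewrite -[v](subrK (v *m S ^+ M)) addrC; apply: addmx_sub_adds.
    by rewrite sub_kermx mulmxBr mulmx1 -mulmxA hM subrr.
  by rewrite sub_kermx mulmxBl -mulmxA hM2 subrr.
split.
  have c1 : S *m (S - 1%:M) = (S - 1%:M) *m S.
    by rewrite mulmxBr mulmxBl mulmx1 mul1mx.
  by rewrite sub_kermx -mulmxA c1 mulmxA mulmx_ker mul0mx.
split.
  by rewrite sub_kermx -mulmxA comm mulmxA mulmx_ker mul0mx.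
split.
  by move=> x; rewrite sub_kermx mulmxBr mulmx1 subr_eq0 => /eqP.
by exists M => w; rewrite sub_kermx => /eqP.
Qed.

Lemma srkP S j :
  srk_is 1%:M S j <-> exists N, forall i, (N <= i)%N -> \rank (S ^+ i) = j.
Proof.
have E : forall i, \rank (pimg 1%:M S i) = \rank (S ^+ i).
  move=> i; rewrite /pimg.
  have e : (pdom 1%:M S i :=: (1%:M : 'M[F]_n))%MS.
    apply/eqmxP/andP; split; first exact: submx1.
    apply/rV_subP => v _.
    by apply/pdomP => l _; exact: submx1.
  by rewrite (eqmxMr _ e) mul1mx.
by split; case=> N h; exists N => i hi; [rewrite -E h | rewrite E h].
Qed.

Lemma rank_adds_row (m : nat) (B : 'M[F]_(m, n)) v :
  \rank (B + v)%MS = (\rank B + ~~ (v <= B)%MS)%N.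
Proof.
case: (boolP (v <= B)%MS) => hv.
  by rewrite addn0; apply/eqmx_rank/eqmxP/addsmx_idPl.
have hlt : (B < B + v)%MS.
  by rewrite ltmxE addsmxSl /= addsmx_sub submx_refl /=.
have h1 := rank_ltmx hlt.
have h2 : (\rank (B + v) <= \rank B + \rank v)%N := mxrank_adds_leqif B v.
have h3 : (\rank v <= 1)%N by rewrite rank_rV; case: (v != 0).
rewrite addn1; apply/eqP; rewrite eqn_leq h1 andbT.
by apply: leq_trans h2 _; rewrite -(addn1 (\rank B)) leq_add2l.
Qed.

End General.
Lemma card_subsp (F : finFieldType) n m (X : 'M[F]_(m, n)) :
  #|[set v : 'rV[F]_n | (v <= X)%MS]| = (#|F| ^ \rank X)%N.
Proof.
have -> : [set v : 'rV[F]_n | (v <= X)%MS] =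
          [set w *m row_base X | w in [set: 'rV[F]_(\rank X)]].
  apply/setP => v; rewrite inE; apply/idP/imsetP.
    by rewrite -(eq_row_base X) => /submxP [w ->]; exists w; rewrite ?inE.
  by case=> w _ ->; rewrite -(eq_row_base X) submxMl.
rewrite card_imset ?cardsT ?card_mx ?mul1n //.
have [B hB] := row_freeP (row_base_free X).
by move=> w1 w2 h; rewrite -[w1]mulmx1 -hB mulmxA h -mulmxA hB mulmx1.
Qed.

Section Chain.
Variables (F : fieldType) (n : nat).
Implicit Types (U S : 'M[F]_n).

Lemma powmono S i t : (S ^+ (i + t) <= S ^+ i)%MS.
Proof. by rewrite addnC exprD -mulmxE submxMl. Qed.

Lemma chain_step S U i : (U *m S <= U)%MS ->
  (S ^+ i <= S ^+ i.+1 + U)%MS -> (S ^+ i.+1 <= S ^+ i.+2 + U)%MS.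
Proof.
move=> hU h; rewrite [S ^+ i.+1]exprSr -mulmxE.
apply: submx_trans (submxMr S h) _.
rewrite addsmxMr; apply: addsmxS => //.
by rewrite [S ^+ i.+2]exprSr -mulmxE.
Qed.

Lemma chainL S U M : (U *m S <= U)%MS -> (S ^+ M <= U)%MS ->
  (S ^+ (n - \rank U) <= U)%MS.
Proof.
move=> hU hM.
have stab : forall i, (S ^+ i <= S ^+ i.+1 + U)%MS -> (S ^+ i <= U)%MS.
  move=> i hi.
  have h1 : forall t, (S ^+ (i + t) <= S ^+ (i + t).+1 + U)%MS.
    by elim=> [|t IH]; rewrite ?addn0 // addnS; apply: chain_step.
  have h2 : forall t, (S ^+ i <= S ^+ (i + t) + U)%MS.
    elim=> [|t IH]; first by rewrite addn0 addsmxSl.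
    apply: submx_trans IH _; rewrite addsmx_sub addsmxSr andbT.
    by rewrite addnS; apply: h1.
  apply: submx_trans (h2 M) _; rewrite addsmx_sub submx_refl andbT.
  by apply: submx_trans (hM); rewrite addnC; apply: powmono.
have P : forall i, (S ^+ i <= U)%MS || (\rank (S ^+ i + U) + i <= n)%N.
  elim=> [|i IH]; first by rewrite addn0 rank_leq_col orbT.
  case/orP: IH => [h|h].
    by rewrite (submx_trans _ h) // -addn1 powmono.
  case: (boolP (S ^+ i <= S ^+ i.+1 + U)%MS) => hs.
    by rewrite (submx_trans _ (stab _ hs)) // -addn1 powmono.
  apply/orP; right.
  have hlt : (S ^+ i.+1 + U < S ^+ i + U)%MS.
    rewrite ltmxE; apply/andP; split.
      by apply: addsmxS => //; rewrite -addn1 powmono.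
    by apply: contra hs => hs; apply: submx_trans hs; apply: addsmxSl.
  have := rank_ltmx hlt; rewrite addnS => hr.
  by apply: leq_trans h; rewrite ltn_add2r.
case/orP: (P (n - \rank U)%N) => // h.
have hr : (\rank (S ^+ (n - \rank U) + U) <= \rank U)%N.
  have := rank_leq_col U; move: h; set r := \rank _; lia.
have e := mxrank_leqif_sup (addsmxSr (S ^+ (n - \rank U)) U).
have h2 : (S ^+ (n - \rank U) + U <= U)%MS.
  by rewrite -(e.2) eqn_leq hr mxrankS ?addsmxSr.
by move: h2; rewrite addsmx_sub; case/andP.
Qed.

End Chain.

Section Main.
Variables (F : finFieldType) (n : nat) (W A : 'M[F]_n) (k : nat)
  (y : 'rV[F]_n) (Dinf : 'M[F]_n) (c : 'cV[F]_n).
Let v0 := y *m A ^+ k.-1.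
Hypotheses (hWr : (\rank W).+1 = n) (hk0 : (0 < k)%N)
  (hkr : (\rank Dinf + k = n)%N) (hDW : (Dinf <= W)%MS)
  (hDA : (Dinf *m A <= Dinf)%MS)
  (hy : forall l, (l < k.-1)%N -> (y *m A ^+ l <= W)%MS)
  (hv0c : v0 *m c = 1%:M) (hWc : W *m c = 0)
  (hG : forall (S U : 'M[F]_n) t, extends W A S -> (Dinf <= U)%MS ->
     (U *m S <= U)%MS ->
     (forall l, (l < k)%N -> (y *m S ^+ (l + t) <= U)%MS) -> (S ^+ t <= U)%MS).

Definition Su (u : 'rV[F]_n) : 'M[F]_n := A + c *m (u - v0 *m A).

Lemma extM S m (X : 'M[F]_(m, n)) : extends W A S -> (X <= W)%MS ->
  X *m S = X *m A.
Proof.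
move=> hS hX; apply: mx_rowsP => v; rewrite !mulmxA; apply: hS.
exact: submx_trans (submxMl v X) hX.
Qed.

Lemma Wc0 m (X : 'M[F]_(m, n)) : (X <= W)%MS -> X *m c = 0.
Proof. by case/submxP=> D ->; rewrite -mulmxA hWc mulmx0. Qed.

Lemma Su_ext u : extends W A (Su u).
Proof. by move=> w hw; rewrite /Su mulmxDr mulmxA Wc0 // mul0mx addr0. Qed.

Lemma v0_Su u : v0 *m Su u = u.
Proof. by rewrite /Su mulmxDr mulmxA hv0c mul1mx addrC subrK. Qed.

Lemma v0_notW : ~~ (v0 <= W)%MS.
Proof.
apply/negP => /Wc0; rewrite hv0c => /matrixP /(_ 0 0).
by rewrite !mxE /= => /eqP; rewrite oner_eq0.
Qed.

Lemma fullWv0 : (1%:M <= W + v0)%MS.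
Proof.
apply: submx_full; rewrite /row_full rank_adds_row v0_notW.
by rewrite addn1 hWr.
Qed.

Lemma Su_eq S : extends W A S -> S = Su (v0 *m S).
Proof.
move=> hS; apply/eqP; rewrite -subr_eq0; apply/eqP.
set D := S - _.
have h1 : W *m D = 0.
  by rewrite /D mulmxBr (extM hS (submx_refl W)) (extM (Su_ext _) (submx_refl W)) subrr.
have h2 : v0 *m D = 0 by rewrite /D mulmxBr v0_Su subrr.
have [[a b] /= e] := sub_addsmxP fullWv0.
by rewrite -[D]mul1mx e mulmxDl -[a *m W *m D]mulmxA -[b *m v0 *m D]mulmxA h1 h2 !mulmx0 addr0.
Qed.

Lemma Su_inj : injective Su.
Proof. by move=> u1 u2 h; rewrite -(v0_Su u1) h v0_Su. Qed.

Lemma Su_space u : (Su u :=: W *m A + u)%MS.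
Proof.
apply/eqmxP/andP; split.
  have [[a b] /= e] := sub_addsmxP fullWv0.
  rewrite -[Su u]mul1mx e mulmxDl -[b *m v0 *m _]mulmxA v0_Su.
  rewrite -[a *m W *m _]mulmxA (extM (Su_ext u)) //.
  by apply: addmx_sub_adds; apply: submxMl.
rewrite addsmx_sub -(extM (Su_ext u)) // submxMl /=.
by rewrite -{1}(v0_Su u) submxMl.
Qed.

Lemma rank_Su u : \rank (Su u) = (\rank (W *m A) + ~~ (u <= W *m A)%MS)%N.
Proof. by rewrite (eqmx_rank (introT eqmxP (Su_space u))) rank_adds_row. Qed.


Lemma DpowA j : (Dinf *m A ^+ j <= Dinf)%MS.
Proof.
elim: j => [|j IH]; first by rewrite expr0 mulmx1.
by rewrite exprSr -mulmxE mulmxA; apply: submx_trans (submxMr A IH) hDA.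
Qed.

Lemma DS S j : extends W A S -> Dinf *m S ^+ j = Dinf *m A ^+ j.
Proof.
move=> hS; elim: j => [|j IH]; first by rewrite !expr0.
rewrite !exprSr -!mulmxE !mulmxA IH (extM hS) //.
exact: submx_trans (DpowA j) hDW.
Qed.

Lemma DsubS S m (X : 'M[F]_(m, n)) j : extends W A S -> (X <= Dinf)%MS ->
  (X *m S ^+ j <= Dinf)%MS.
Proof.
move=> hS /submxP [a ->]; rewrite -mulmxA DS //.
exact: submx_trans (submxMl _ _) (DpowA j).
Qed.

Lemma yS S l : extends W A S -> (l <= k.-1)%N -> y *m S ^+ l = y *m A ^+ l.
Proof.
move=> hS; elim: l => [|l IH] hl; first by rewrite !expr0.
rewrite !exprSr -!mulmxE !mulmxA IH ?(ltnW hl) // (extM hS) //.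
exact: hy.
Qed.

Lemma uS S : extends W A S -> y *m S ^+ k = v0 *m S.
Proof.
move=> hS; rewrite -(prednK hk0) exprSr -mulmxE mulmxA yS //.
Qed.

Lemma fixpow S m (X : 'M[F]_(m, n)) : X *m S = X -> forall t, X *m S ^+ t = X.
Proof.
move=> h; elim=> [|t IH]; first by rewrite expr0 mulmx1.
by rewrite exprSr -mulmxE mulmxA IH h.
Qed.

Lemma semiD S : extends W A S -> semi_idempotent S ->
  exists J, Dinf *m A ^+ J *m A = Dinf *m A ^+ J.
Proof.
move=> hS /semiP [M hM]; exists M.
rewrite -(extM hS); last exact: submx_trans (DpowA M) hDW.
by rewrite -(DS M hS) -mulmxA hM.
Qed.

Section WithJ.
Variables (J s : nat).
Hypotheses (hP : Dinf *m A ^+ J *m A = Dinf *m A ^+ J)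
  (hJs : \rank (Dinf *m A ^+ J) = s).
Let Z := Dinf *m A ^+ J.
Let Y := Dinf *m (1%:M - A).

Lemma Zpow t : Dinf *m A ^+ (J + t) = Z.
Proof.
elim: t => [|t IH]; first by rewrite addn0.
by rewrite addnS exprSr -mulmxE mulmxA IH hP.
Qed.

Lemma ZD : (Z <= Dinf)%MS.
Proof. exact: DpowA. Qed.

Lemma DSt S t : extends W A S -> (J <= t)%N -> Dinf *m S ^+ t = Z.
Proof. by move=> hS ht; rewrite DS // -(subnKC ht) Zpow. Qed.

Lemma DsubZ S t m (X : 'M[F]_(m, n)) : extends W A S -> (J <= t)%N ->
  (X <= Dinf)%MS -> (X *m S ^+ t <= Z)%MS.
Proof. by move=> hS ht /submxP [a ->]; rewrite -mulmxA DSt // submxMl. Qed.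

Lemma DstabS S : extends W A S -> (Dinf *m S <= Dinf)%MS.
Proof. by move=> hS; rewrite (extM hS). Qed.

Lemma ZS S : extends W A S -> Z *m S = Z.
Proof.
move=> hS; rewrite (extM hS) ?hP //.
exact: submx_trans ZD hDW.
Qed.

Lemma C1 S : extends W A S ->
  (semi_idempotent S /\ srk_is 1%:M S s) <-> (v0 *m S <= Dinf)%MS.
Proof.
move=> hS; split.
  case=> /semiP [M hM] /srkP [N hN].
  set M' := (M + (N + J))%N.
  have hZ : (Z <= S ^+ M')%MS.
    by rewrite -(DSt hS (_ : J <= M')%N) ?submxMl // /M'; lia.
  have hr : \rank (S ^+ M') = s by apply: hN; rewrite /M'; lia.
  have e := mxrank_leqif_sup hZ.
  have hSZ : (S ^+ M' <= Z)%MS by rewrite -(e.2) hr hJs.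
  have hSD : (S ^+ M' <= Dinf)%MS := submx_trans hSZ ZD.
  have := chainL (DstabS hS) hSD.
  rewrite (_ : (n - \rank Dinf = k)%N); last by lia.
  by move=> hk; rewrite -uS //; apply: submx_trans (submxMl _ _) hk.
move=> hu.
have hk : (S ^+ k <= Dinf)%MS.
  apply: (hG hS (submx_refl _) (DstabS hS)) => l _.
  by rewrite addnC exprD -mulmxE mulmxA uS //; apply: DsubS.
have hkt : forall t, (J <= t)%N -> (S ^+ (k + t) <= Z)%MS.
  by move=> t ht; rewrite exprD -mulmxE; apply: DsubZ.
have hZt : forall t, (J <= t)%N -> (Z <= S ^+ t)%MS.
  by move=> t ht; rewrite -(DSt hS ht) submxMl.
split.
  apply/semiP; exists (k + J)%N.
  have /submxP [a ->] := hkt J (leqnn J).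
  by rewrite -mulmxA ZS.
apply/srkP; exists (k + J)%N => t ht.
rewrite -hJs; apply/eqmx_rank/andP; split.
  by rewrite -(subnKC (_ : k <= t)%N) ?hkt //; lia.
by apply: hZt; lia.
Qed.


Lemma C2 S : extends W A S ->
  (semi_idempotent S /\ srk_is 1%:M S s.+1) <-> (v0 *m S - v0 <= Y)%MS.
Proof.
move=> hS; split.
  case=> /semiP [M hM] /srkP [N hN].
  set M' := (M + (N + J))%N.
  set X := S ^+ M'.
  have hXS : X *m S = X by rewrite /X /M' powS // hM.
  have hZ : (Z <= X)%MS.
    by rewrite -(DSt hS (_ : J <= M')%N) ?submxMl // /M'; lia.
  have hr : \rank X = s.+1 by apply: hN; rewrite /M'; lia.
  have hXD : ~~ (X <= Dinf)%MS.
    apply/negP => hXD.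
    have : (X *m S ^+ J <= Z)%MS by apply: DsubZ.
    rewrite fixpow // => /mxrankS; rewrite hr hJs; lia.
  set U := (Dinf + X)%MS.
  have hUS : (U *m S <= U)%MS.
    rewrite addsmxMr; apply: addsmxS; first exact: DstabS.
    by rewrite hXS.
  have hlt : (Dinf < U)%MS.
    rewrite ltmxE addsmxSl /=; apply: contra hXD => h.
    exact: submx_trans (addsmxSr _ _) h.
  have hrU := rank_ltmx hlt.
  have hU := chainL hUS (addsmxSr Dinf X : (S ^+ M' <= U)%MS).
  have hk1 : (S ^+ k.-1 <= U)%MS.
    apply: submx_trans hU.
    rewrite -(subnKC (_ : n - \rank U <= k.-1)%N) ?powmono //.
    have := rank_leq_col U; lia.
  have hv0 : (v0 <= U)%MS.
    by rewrite /v0 -(yS hS (leqnn _)); apply: submx_trans (submxMl _ _) hk1.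
  have [[a b] /= e] := sub_addsmxP hv0.
  rewrite e mulmxDl -!mulmxA hXS (extM hS (hDW)).
  rewrite [a *m Dinf + _]addrC opprD addrA addrK.
  apply/submxP; exists (- a); rewrite /Y mulNmx mulmxBr mulmx1 mulmxBr.
  by rewrite opprB.
move=> /submxP [a ha].
set d := a *m Dinf.
have hdD : (d <= Dinf)%MS by rewrite submxMl.
have hdS : d *m S = d *m A by rewrite (extM hS) // (submx_trans hdD hDW).
have hu : v0 *m S = v0 + d - d *m A.
  by rewrite -[v0 *m S](subrK v0) ha /Y !mulmxBr mulmx1 mulmxA -/d addrC addrA.
set x := v0 + d.
have hxS : x *m S = x by rewrite /x mulmxDl hu hdS subrK.
set U := (Dinf + x)%MS.
have hUS : (U *m S <= U)%MS.
  rewrite addsmxMr; apply: addsmxS; first exact: DstabS.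
  by rewrite hxS.
have hk1 : (S ^+ k.-1 <= U)%MS.
  apply: (hG hS (addsmxSl _ _) hUS) => l _.
  rewrite addnC exprD -mulmxE mulmxA yS // -/v0.
  rewrite (_ : v0 = x - d); last by rewrite /x addrK.
  rewrite mulmxBl fixpow // addrC; apply: addmx_sub_adds => //.
  by rewrite -mulNmx; apply: DsubS => //; rewrite /d -mulNmx submxMl.
have [[a' b'] /= e] := sub_addsmxP hk1.
have hSt : forall t, (J <= t)%N -> S ^+ (k.-1 + t) = a' *m Z + b' *m x.
  move=> t ht; rewrite exprD -mulmxE e mulmxDl -!mulmxA DSt // fixpow //.
have hxZ : ~~ (x <= Z)%MS.
  apply/negP => hx; have := Wc0 (submx_trans hx (submx_trans ZD hDW)).
  rewrite /x mulmxDl hv0c (Wc0 (submx_trans hdD hDW)) addr0 => /matrixP /(_ 0 0).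
  by rewrite !mxE /= => /eqP; rewrite oner_eq0.
split.
  apply/semiP; exists (k.-1 + J)%N.
  by rewrite hSt // mulmxDl -[a' *m Z *m S]mulmxA -[b' *m x *m S]mulmxA ZS // hxS.
apply/srkP; exists (k.-1 + J)%N => t ht.
have -> : \rank (S ^+ t) = \rank (Z + x)%MS.
  apply/eqmx_rank/andP; split.
    rewrite -(subnKC (_ : k.-1 <= t)%N); last by lia.
    rewrite hSt; last by lia.
    by apply: addmx_sub_adds; apply: submxMl.
  rewrite addsmx_sub; apply/andP; split.
    by rewrite -(DSt hS (_ : J <= t)%N) ?submxMl //; lia.
  by rewrite -{1}(fixpow hxS t) submxMl.
by rewrite rank_adds_row hxZ hJs addn1.
Qed.

Lemma YD : (Y <= Dinf)%MS.
Proof.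
rewrite /Y mulmxBr mulmx1; apply: addmx_sub => //.
by rewrite eqmx_opp; exact: hDA.
Qed.

Lemma dA_fix (d : 'rV[F]_n) : (d <= Dinf)%MS -> d *m A ^+ J.+1 = d *m A ^+ J.
Proof. by case/submxP=> a ->; rewrite exprSr -mulmxE -!mulmxA; congr (a *m _); rewrite mulmxA hP. Qed.

Lemma ZYdis (t : 'rV[F]_n) : (t <= Z)%MS -> (t <= Y)%MS -> t = 0.
Proof.
move=> /submxP [a ha] /submxP [b hb].
have htA : t *m A = t by rewrite ha -mulmxA hP.
have : t *m A ^+ J = 0.
  have -> : t *m A ^+ J = (b *m Dinf) *m A ^+ J - (b *m Dinf) *m A ^+ J.+1.
    by rewrite hb /Y !mulmxA mulmxBr mulmx1 mulmxBl exprS -mulmxE !mulmxA.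
  by rewrite dA_fix ?subrr // submxMl.
by rewrite fixpow.
Qed.

Lemma decompD (u : 'rV[F]_n) : (u <= Dinf)%MS -> (u - u *m A ^+ J <= Y)%MS.
Proof.
move=> hu; have : forall j, (u - u *m A ^+ j <= Y)%MS.
  elim=> [|j IH]; first by rewrite expr0 mulmx1 subrr sub0mx.
  have -> : u - u *m A ^+ j.+1 = (u - u *m A ^+ j) + (u *m A ^+ j) *m (1%:M - A).
    by rewrite mulmxBr mulmx1 addrA subrK exprSr -mulmxE mulmxA.
  apply: addmx_sub => //; case/submxP: hu => a ->.
  have /submxP [b ->] : (a *m Dinf *m A ^+ j <= Dinf)%MS.
    by rewrite -mulmxA; apply: submx_trans (submxMl _ _) (DpowA j).
  by rewrite -mulmxA submxMl.
by [].
Qed.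

Lemma subv_sub m (X : 'M[F]_(m, n)) (a b : 'rV[F]_n) :
  (a <= X)%MS -> (b <= X)%MS -> (a - b <= X)%MS.
Proof. by move=> ha hb; apply: addmx_sub => //; rewrite eqmx_opp. Qed.

Lemma count1 (Q : pred 'rV[F]_n) :
  (forall z v, (z <= Z)%MS -> Q (z + v) = Q v) ->
  #|[set u : 'rV[F]_n | (u <= Dinf)%MS && Q u]| =
  (#|F| ^ s * #|[set v : 'rV[F]_n | (v <= Y)%MS && Q v]|)%N.
Proof.
move=> hQ.
rewrite -hJs -card_subsp -cardsX.
rewrite -(card_in_imset (f := fun p : 'rV[F]_n * 'rV[F]_n => p.1 + p.2)).
  apply: eq_card => u; apply/idP/imsetP.
    rewrite inE; case/andP=> hu hq; exists (u *m A ^+ J, u - u *m A ^+ J).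
      have hz : (u *m A ^+ J <= Z)%MS.
        by case/submxP: hu => a ->; rewrite -mulmxA submxMl.
      rewrite !inE /= hz decompD //= -(hQ (u *m A ^+ J)) //.
      by rewrite addrC subrK.
    by rewrite /= addrC subrK.
  case=> [[z v]]; rewrite !inE /= => /andP [hz /andP [hv hq]] ->.
  rewrite hQ // hq andbT; apply: addmx_sub.
    exact: submx_trans hz ZD.
  exact: submx_trans hv YD.
move=> [z1 v1] [z2 v2]; rewrite !inE /=.
move=> /andP [hz1 /andP [hv1 _]] /andP [hz2 /andP [hv2 _]] e.
have e2 : z1 - z2 = v2 - v1.
  have : z1 + v1 - z2 - v1 = z2 + v2 - z2 - v1 by rewrite e.
  by rewrite addrAC addrK [z2 + v2]addrC addrK.
have h0 : z1 - z2 = 0.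
  apply: ZYdis; first exact: subv_sub.
  by rewrite e2; apply: subv_sub.
have ez : z1 = z2 by apply/eqP; rewrite -subr_eq0 h0.
by move: e2; rewrite h0 ez => /eqP; rewrite eq_sym subr_eq0 => /eqP ->.
Qed.

Lemma count2 (Q : pred 'rV[F]_n) (w : 'rV[F]_n) :
  (forall v, Q (v + w) = Q v) ->
  #|[set u : 'rV[F]_n | (u - w <= Y)%MS && Q u]| =
  #|[set v : 'rV[F]_n | (v <= Y)%MS && Q v]|.
Proof.
move=> hQ; rewrite -[in RHS](card_imset _ (addIr w)).
apply: eq_card => u; apply/idP/imsetP.
  rewrite inE; case/andP=> h1 h2; exists (u - w); last by rewrite subrK.
  by rewrite inE h1 -hQ subrK h2.
by case=> v; rewrite inE => /andP [h1 h2] ->; rewrite inE addrK h1 hQ.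
Qed.

Lemma count_main (Q : pred 'rV[F]_n) :
  (forall z v, (z <= Z)%MS -> Q (z + v) = Q v) ->
  (forall v, Q (v + v0) = Q v) ->
  #|[set u : 'rV[F]_n | `[< semi_idempotent (Su u) /\ srk_is 1%:M (Su u) s >]
      && Q u]| =
  (#|F| ^ s * #|[set u : 'rV[F]_n | `[< semi_idempotent (Su u) /\
      srk_is 1%:M (Su u) s.+1 >] && Q u]|)%N.
Proof.
move=> hQ1 hQ2.
have -> : [set u : 'rV[F]_n | `[< semi_idempotent (Su u) /\
   srk_is 1%:M (Su u) s >] && Q u] = [set u | (u <= Dinf)%MS && Q u].
  apply/setP => u; rewrite !inE.
  by rewrite (propext (C1 (Su_ext u))) v0_Su asboolb.
have -> : [set u : 'rV[F]_n | `[< semi_idempotent (Su u) /\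
   srk_is 1%:M (Su u) s.+1 >] && Q u] = [set u | (u - v0 <= Y)%MS && Q u].
  apply/setP => u; rewrite !inE.
  by rewrite (propext (C2 (Su_ext u))) v0_Su asboolb.
by rewrite count1 // count2.
Qed.

End WithJ.
Lemma card_ext (PP : 'M[F]_n -> Prop) :
  #|[set S : 'M[F]_n | `[< extends W A S /\ PP S >]]| =
  #|[set u : 'rV[F]_n | `[< PP (Su u) >]]|.
Proof.
rewrite -[in RHS](card_imset _ Su_inj); apply: eq_card => S.
apply/idP/imsetP.
  rewrite inE => /asboolP [hS hP]; exists (v0 *m S); last exact: Su_eq.
  by rewrite inE; apply/asboolP; rewrite -Su_eq.
case=> u; rewrite inE => /asboolP h ->; rewrite inE; apply/asboolP.
by split => //; exact: Su_ext.
Qed.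

Lemma e2E j : e2 W A j =
  #|[set u : 'rV[F]_n | `[< semi_idempotent (Su u) /\ srk_is 1%:M (Su u) j >]
     && predT u]|.
Proof.
rewrite /e2; transitivity #|[set S : 'M[F]_n | `[< extends W A S /\
   (semi_idempotent S /\ srk_is 1%:M S j) >]]|.
  by apply: eq_card => S; rewrite !inE; apply/asboolP/asboolP; tauto.
by rewrite card_ext; apply: eq_card => u; rewrite !inE andbT.
Qed.

Lemma e3E i j : e3 W A i j =
  #|[set u : 'rV[F]_n | `[< semi_idempotent (Su u) /\ srk_is 1%:M (Su u) j >]
     && (\rank (Su u) == i)]|.
Proof.
rewrite /e3; transitivity #|[set S : 'M[F]_n | `[< extends W A S /\
   ((semi_idempotent S /\ srk_is 1%:M S j) /\ \rank S = i) >]]|.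
  by apply: eq_card => S; rewrite !inE; apply/asboolP/asboolP; tauto.
rewrite card_ext; apply: eq_card => u; rewrite !inE.
apply/asboolP/andP.
  by case=> h /eqP ->; split => //; apply/asboolP.
by case=> /asboolP h /eqP ->.
Qed.

Lemma empty_case j (Q : pred 'rV[F]_n) :
  ~ (exists J, Dinf *m A ^+ J *m A = Dinf *m A ^+ J) ->
  #|[set u : 'rV[F]_n | `[< semi_idempotent (Su u) /\ srk_is 1%:M (Su u) j >]
     && Q u]| = 0%N.
Proof.
move=> hno; apply/eqP; rewrite cards_eq0; apply/eqP/setP => u; rewrite !inE.
apply/negbTE/negP => /andP [/asboolP [hs _] _]; apply: hno.
exact: semiD (Su_ext u) hs.
Qed.

Lemma Qsub (R : 'M[F]_n) (z v : 'rV[F]_n) : (z <= R)%MS ->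
  ((z + v)%R <= R)%MS = (v <= R)%MS.
Proof.
move=> hz; apply/idP/idP => h; last exact: addmx_sub hz h.
by rewrite -(addKr z v); apply: addmx_sub => //; rewrite eqmx_opp.
Qed.

Theorem abstract_main (s N0 : nat)
  (hsD : forall j, (N0 <= j)%N -> \rank (Dinf *m A ^+ j) = s)
  (hk1 : k = 1%N -> (W *m A <= W)%MS) :
  e2 W A s = (#|F| ^ s * e2 W A s.+1)%N /\
  (~~ (W *m A <= W)%MS ->
     e3 W A (\rank (W *m A)) s = (#|F| ^ s * e3 W A (\rank (W *m A)) s.+1)%N /\
     e3 W A (\rank (W *m A)).+1 s = (#|F| ^ s * e3 W A (\rank (W *m A)).+1 s.+1)%N).
Proof.
case: (pselect (exists J, Dinf *m A ^+ J *m A = Dinf *m A ^+ J)); last first.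
  by move=> hno; rewrite !e2E !e3E !empty_case // muln0.
case=> J0 hJ0.
set J := (J0 + N0).+1.
have hJ : Dinf *m A ^+ J = Dinf *m A ^+ J0.
  by rewrite /J -addnS (Zpow hJ0).
have hP : Dinf *m A ^+ J *m A = Dinf *m A ^+ J by rewrite hJ hJ0.
have hJs : \rank (Dinf *m A ^+ J) = s by apply: hsD; rewrite /J; lia.
split.
  by rewrite !e2E (count_main hP hJs).
move=> hnot.
set R := (W *m A)%MS.
have hZR : (Dinf *m A ^+ J <= R)%MS.
  rewrite /J exprSr -mulmxE mulmxA; apply: submxMr.
  exact: submx_trans (DpowA _) hDW.
have hv0R : (v0 <= R)%MS.
  have hk2 : (1 < k)%N.
    by move: hk0; rewrite leq_eqVlt => /orP [/eqP hk|//]; move: hnot; rewrite hk1.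
  rewrite /v0 -(prednK (_ : 0 < k.-1)%N); last by lia.
  rewrite exprSr -mulmxE mulmxA; apply: submxMr; apply: hy; lia.
have rk1 : forall u, (\rank (Su u) == \rank R) = (u <= R)%MS.
  move=> u; rewrite rank_Su; case: (u <= R)%MS; first by rewrite addn0 eqxx.
  by rewrite addn1 eqn_leq ltnn.
have rk2 : forall u, (\rank (Su u) == (\rank R).+1) = ~~ (u <= R)%MS.
  move=> u; rewrite rank_Su; case: (u <= R)%MS; last by rewrite addn1 eqxx.
  by rewrite addn0 eqn_leq ltnn andbF.
rewrite !e3E.
have eqs : forall (j : nat) (b : bool) (Q : pred 'rV[F]_n),
  (forall u, (\rank (Su u) == (\rank R + b)%N) = Q u) ->
  #|[set u : 'rV[F]_n | `[< semi_idempotent (Su u) /\ srk_is 1%:M (Su u) j >]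
     && (\rank (Su u) == (\rank R + b)%N)]| =
  #|[set u : 'rV[F]_n | `[< semi_idempotent (Su u) /\ srk_is 1%:M (Su u) j >]
     && Q u]|.
  by move=> j b Q hQ; apply: eq_card => u; rewrite !inE hQ.
have h1 := eqs _ false _ (fun u => etrans (congr1 _ (addn0 _)) (rk1 u)).
have h2 := eqs _ true _ (fun u => etrans (congr1 _ (addn1 _)) (rk2 u)).
rewrite -(addn1 (\rank R)) !h2 -(addn0 (\rank R)) !h1.
split; apply: (count_main hP hJs).
- by move=> z v hz; apply: Qsub; apply: submx_trans hz hZR.
- by move=> v; rewrite addrC; apply: Qsub.
- by move=> z v hz /=; rewrite Qsub //; apply: submx_trans hz hZR.
- by move=> v /=; rewrite addrC Qsub.
Qed.

End Main.

Section Construct.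
Variables (F : finFieldType) (n : nat) (W A : 'M[F]_n).
Hypothesis hWr : (\rank W).+1 = n.
Local Notation D := (pdom W A).

Lemma Dmem i (v : 'rV[F]_n) :
  (v <= D i)%MS <-> (forall l, (l < i)%N -> (v *m A ^+ l <= W)%MS).
Proof. exact: pdomP. Qed.

Lemma Dsub i : (D i.+1 <= D i)%MS.
Proof. by rewrite /= capmxSl. Qed.

Lemma Dsubn i j : (i <= j)%N -> (D j <= D i)%MS.
Proof.
move=> hij; rewrite -(subnKC hij); elim: (j - i)%N => [|t IH].
  by rewrite addn0.
by rewrite addnS; apply: submx_trans (Dsub _) IH.
Qed.

Lemma DA i (v : 'rV[F]_n) : (v <= D i.+1)%MS -> (v *m A <= D i)%MS.
Proof.
move/Dmem => h; apply/Dmem => l hl.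
have -> : v *m A *m A ^+ l = v *m A ^+ l.+1 by rewrite -mulmxA exprS mulmxE.
by apply: h.
Qed.

Lemma Drank i : (\rank (D i) <= (\rank (D i.+1)).+1)%N.
Proof.
rewrite /=; set P := preimmx _ _.
have hP : (n.-1 <= \rank P)%N.
  have e1 : (n - \rank W = 1)%N by move: hWr; lia.
  have h1 : (\rank (A ^+ i *m cokermx W) <= 1)%N.
    by apply: leq_trans (mxrankM_maxr _ _) _; rewrite mxrank_coker e1.
  rewrite /P /preimmx mxrank_ker.
  move: h1; set r := \rank _; lia.
have := mxrank_sum_cap (D i) P.
have := rank_leq_col (D i + P)%MS.
lia.
Qed.

Lemma Dstab i : (D i <= D i.+1)%MS -> (D i.+1 <= D i.+2)%MS.
Proof.
move=> h; apply/rV_subP => v hv; apply/Dmem => l hl.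
case: l hl => [|l] hl; first by move/Dmem: hv; apply.
have -> : v *m A ^+ l.+1 = v *m A *m A ^+ l by rewrite -mulmxA exprS mulmxE.
have : (v *m A <= D i.+1)%MS := submx_trans (DA hv) h.
by move/Dmem; apply.
Qed.

Lemma D0 : D 0 = 1%:M. Proof. by []. Qed.

Lemma D1rank : \rank (D 1) = \rank W.
Proof.
apply/eqmx_rank/andP; split; apply/rV_subP => v.
  by move/Dmem => /(_ 0%N isT); rewrite expr0 mulmx1.
by move=> hv; apply/Dmem => l; rewrite ltnS leqn0 => /eqP ->; rewrite expr0 mulmx1.
Qed.

Lemma Dex : exists i, (D i <= D i.+1)%MS.
Proof.
case: (pselect (exists i, (D i <= D i.+1)%MS)) => // hno; exfalso.
have H : forall i, (\rank (D i) + i <= n)%N.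
  elim=> [|i IH]; first by rewrite addn0 D0 mxrank1.
  have hlt : (D i.+1 < D i)%MS.
    rewrite ltmxE Dsub /=; apply/negP => h; apply: hno; by exists i.
  have := rank_ltmx hlt; lia.
by have := H n.+1; lia.
Qed.

Section K.
Let k := ex_minn Dex.

Lemma kP : (D k <= D k.+1)%MS.
Proof. by rewrite /k; case: ex_minnP. Qed.

Lemma kmin i : (D i <= D i.+1)%MS -> (k <= i)%N.
Proof. by rewrite /k; case: ex_minnP => m _ h /h. Qed.

Lemma Drank_lt i : (i < k)%N -> \rank (D i) = (\rank (D i.+1)).+1.
Proof.
move=> hi.
have hn : ~~ (D i <= D i.+1)%MS by apply/negP => /kmin; lia.
have hlt : (D i.+1 < D i)%MS by rewrite ltmxE Dsub.
have := rank_ltmx hlt; have := Drank i; lia.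
Qed.

Lemma DrankE i : (i <= k)%N -> (\rank (D i) + i = n)%N.
Proof.
elim: i => [|i IH] hi; first by rewrite addn0 D0 mxrank1.
have := IH (ltnW hi); rewrite Drank_lt //; lia.
Qed.

Lemma k0 : (0 < k)%N.
Proof.
rewrite lt0n; apply/negP => /eqP hk.
have := kP; rewrite hk => /mxrankS; rewrite D1rank D0 mxrank1; move: hWr; lia.
Qed.

Lemma Dstable j : (k <= j)%N -> (D k <= D j)%MS.
Proof.
move=> hj; rewrite -(subnKC hj).
have : forall t, (D (k + t) <= D (k + t).+1)%MS.
  by elim=> [|t IH]; [rewrite addn0 kP | rewrite addnS; apply: Dstab].
move=> h; elim: (j - k)%N => [|t IH]; first by rewrite addn0.
by apply: submx_trans IH _; rewrite addnS.
Qed.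

Lemma hDW : (D k <= W)%MS.
Proof.
apply/rV_subP => v /Dmem h; have := h 0%N k0; by rewrite expr0 mulmx1.
Qed.

Lemma hDA : (D k *m A <= D k)%MS.
Proof.
apply/rV_subP => v /submxP [a ->]; rewrite mulmxA; apply: DA.
by apply: submx_trans kP; apply: submxMl.
Qed.

Lemma ychoice : exists y : 'rV[F]_n, (y <= D k.-1)%MS /\ ~~ (y <= D k)%MS.
Proof.
have : ~~ (D k.-1 <= D k.-1.+1)%MS.
  apply/negP => /kmin; have := k0; lia.
rewrite prednK ?k0 // => /row_subPn [i hi].
by exists (row i (D k.-1)); rewrite row_sub.
Qed.

Section Y.
Variable y : 'rV[F]_n.
Hypotheses (hy1 : (y <= D k.-1)%MS) (hy2 : ~~ (y <= D k)%MS).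

Lemma yAW l : (l < k.-1)%N -> (y *m A ^+ l <= W)%MS.
Proof. by move/Dmem: hy1; apply. Qed.

Lemma v0notW : ~~ (y *m A ^+ k.-1 <= W)%MS.
Proof.
apply: contra hy2 => h; apply/Dmem => l hl.
have := k0; case: (ltngtP l k.-1) => [h1 _|h1 _|-> _ //]; first exact: yAW.
lia.
Qed.

Lemma ydec j : (j < k)%N -> (D j <= D j.+1 + y *m A ^+ (k.-1 - j))%MS.
Proof.
move=> hj.
have hyj : (y *m A ^+ (k.-1 - j) <= D j)%MS.
  apply/Dmem => l hl; rewrite -mulmxA mulmx_exp.
  by apply: yAW; lia.
have hn : ~~ (y *m A ^+ (k.-1 - j) <= D j.+1)%MS.
  apply: contra v0notW => /Dmem /(_ j (ltnSn j)).
  by rewrite -mulmxA mulmx_exp subnK //; lia.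
have hsub : (D j.+1 + y *m A ^+ (k.-1 - j) <= D j)%MS.
  by rewrite addsmx_sub Dsub hyj.
have e := mxrank_leqif_sup hsub.
by rewrite -(e.2) rank_adds_row hn (Drank_lt hj) -[nat_of_bool true]/1%N addn1.
Qed.

Lemma ySc S l : extends W A S -> (l <= k.-1)%N -> y *m S ^+ l = y *m A ^+ l.
Proof.
move=> hS; elim: l => [|l IH] hl; first by rewrite !expr0.
rewrite !exprSr -!mulmxE !mulmxA IH ?(ltnW hl) // hS //.
exact: yAW.
Qed.

Lemma hGc (S U : 'M[F]_n) t : extends W A S -> (D k <= U)%MS ->
  (U *m S <= U)%MS ->
  (forall l, (l < k)%N -> (y *m S ^+ (l + t) <= U)%MS) -> (S ^+ t <= U)%MS.
Proof.
move=> hS hDU hUS hyU.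
have Dkpow : forall (v : 'rV[F]_n) t, (v <= D k)%MS -> (v *m S ^+ t <= D k)%MS.
  move=> v; elim=> [|t' IH] hv; first by rewrite expr0 mulmx1.
  rewrite exprSr -mulmxE mulmxA hS; last exact: submx_trans (IH hv) hDW.
  by apply: DA; apply: submx_trans kP; apply: IH.
have claim : forall m, (m <= k)%N -> forall v : 'rV[F]_n,
    (v <= D (k - m))%MS -> (v *m S ^+ t <= U)%MS.
  elim=> [|m IH] hm v hv.
    by apply: submx_trans hDU; apply: Dkpow; rewrite subn0 in hv.
  have hj : (k - m.+1 < k)%N by lia.
  have := ydec hj.
  rewrite (_ : (k - m.+1).+1 = k - m)%N; last by lia.
  rewrite (_ : (k.-1 - (k - m.+1) = m)%N); last by lia.
  move=> hd; have [[a b] /= e] := sub_addsmxP (submx_trans hv hd).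
  rewrite e mulmxDl; apply: addmx_sub.
    by apply: IH; [lia | apply: submxMl].
  rewrite -!mulmxA; apply: submx_trans (submxMl _ _) _.
  rewrite mulmxA -(ySc hS (_ : m <= k.-1)%N); last by lia.
  by rewrite -mulmxA mulmx_exp; apply: hyU; lia.
rewrite -[S ^+ t]mul1mx; apply/row_subP => i; rewrite row_mul.
by apply: (claim k (leqnn k)); rewrite subnn D0 submx1.
Qed.

Lemma cexists : exists c : 'cV[F]_n,
  W *m c = 0 /\ (y *m A ^+ k.-1) *m c = 1%:M.
Proof.
set v0 := y *m A ^+ k.-1.
set r := v0 *m cokermx W.
have hr : r != 0 by have := v0notW; rewrite submxE.
have [j hj] : exists j, r 0 j != 0.
  apply/existsP; apply: contraR hr => /existsPn h; apply/eqP/matrixP => a b.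
  by rewrite ord1; move: (h b); rewrite negbK => /eqP ->; rewrite mxE.
exists ((r 0 j)^-1 *: (cokermx W *m delta_mx j 0)); split.
  by rewrite -scalemxAr mulmxA mulmx_coker mul0mx scaler0.
rewrite -scalemxAr mulmxA -/r -colE; clearbody r; apply/matrixP => a b.
by rewrite !ord1 !mxE /= mulVf.
Qed.

End Y.

Lemma hsDc s : srk_is W A s ->
  exists N0, forall j, (N0 <= j)%N -> \rank (D k *m A ^+ j) = s.
Proof.
case=> N hN; exists (maxn N k) => j hj.
rewrite -(hN j); last by move: hj; rewrite geq_max => /andP [].
rewrite /pimg; apply: eqmx_rank; apply/eqmxP; apply: eqmxMr; apply/eqmxP/andP; split.
  by apply: Dstable; move: hj; rewrite geq_max => /andP [].
by apply: Dsubn; move: hj; rewrite geq_max => /andP [].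
Qed.

Lemma hk1c : k = 1%N -> (W *m A <= W)%MS.
Proof.
move=> hk; have := kP; rewrite hk => h.
apply/rV_subP => v /submxP [a ->]; rewrite mulmxA.
have : (a *m W <= D 2)%MS.
  apply: submx_trans h; apply/Dmem => l; rewrite ltnS leqn0 => /eqP ->.
  by rewrite expr0 mulmx1 submxMl.
by move/Dmem => /(_ 1%N isT); rewrite expr1.
Qed.

Theorem constructed s (hs : srk_is W A s) :
  e2 W A s = (#|F| ^ s * e2 W A s.+1)%N /\
  (~~ (W *m A <= W)%MS ->
     e3 W A (\rank (W *m A)) s = (#|F| ^ s * e3 W A (\rank (W *m A)) s.+1)%N /\
     e3 W A (\rank (W *m A)).+1 s = (#|F| ^ s * e3 W A (\rank (W *m A)).+1 s.+1)%N).
Proof.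
have [y [hy1 hy2]] := ychoice.
have [c [hWc hv0c]] := cexists hy1 hy2.
have [N0 hN0] := hsDc hs.
apply: (@abstract_main F n W A k y (D k) c hWr k0 (DrankE (leqnn k))
  hDW hDA (yAW hy1) hv0c hWc _ s N0 hN0 hk1c).
by move=> S U t; apply: hGc.
Qed.

End K.
End Construct.

Theorem lemma3p3 (F : finFieldType) (n : nat) (W A : 'M[F]_n)
    (hW : (\rank W).+1 = n) (s : nat) (hs : srk_is W A s) :
  e2 W A s = (#|F| ^ s * e2 W A s.+1)%N /\
  (~~ (W *m A <= W)%MS ->
     e3 W A (\rank (W *m A)) s = (#|F| ^ s * e3 W A (\rank (W *m A)) s.+1)%N /\
     e3 W A (\rank (W *m A)).+1 s = (#|F| ^ s * e3 W A (\rank (W *m A)).+1 s.+1)%N).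
Proof. exact: (constructed hW hs). Qed.
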